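(* A lattice $L$ is isomorphic to a lattice of equational theories if and only if $L$ is isomorphic to the congruence lattice of a finite dimensional clone algebra (of some type).
   Context: A lattice of equational theories is a lattice of the form $L(T)$: the set of all equational theories (of some fixed type) containing a given equational theory $T$, ordered by inclusion. A clone $\tau$-algebra is an algebra $\mathbf C=(C,\sigma^{\mathbf C}\ (\sigma\in\tau),q_n^{\mathbf C}\ (n\ge0),\mathsf e_i^{\mathbf C}\ (i\ge1))$ with $\mathsf e_i$ nullary, $q_n$ of arity $n+1$, satisfying: (C1) $q_n(\mathsf e_i,x_1,\dots,x_n)=x_i$ ($1\le i\le n$); (C2) $q_n(\mathsf e_j,x_1,\dots,x_n)=\mathsf e_j$ ($j>n$); (C3) $q_n(x,\mathsf e_1,\dots,\mathsf e_n)=x$; (C4) $q_k(x,y_1,\dots,y_k)=q_n(x,y_1,\dots,y_k,\mathsf e_{k+1},\dots,\mathsf e_n)$ ($n>k$); (C5) $q_n(q_n(x,\mathbf y),\mathbf z)=q_n(x,q_n(y_1,\mathbf z),\dots,q_n(y_n,\mathbf z))$ with $\mathbf y,\mathbf z$ of length $n$; (C6) $q_n(\sigma(x_1,\dots,x_k),\mathbf y)=\sigma(q_n(x_1,\mathbf y),\dots,q_n(x_k,\mathbf y))$ for $\sigma\in\tau$ of arity $k$. A clone algebra is a clone $\tau$-algebra for some type $\tau$. An element $a$ is independent of $\mathsf e_n$ if $q_n(a,\mathsf e_1,\dots,\mathsf e_{n-1},\mathsf e_{n+1})=a$; the clone algebra is finite dimensional if each element is dependent on only finitely many $\mathsf e_n$.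 *)

(* Defs.v *)
From mathcomp Require Import all_boot all_order.
Set Implicit Arguments. Unset Strict Implicit. Unset Printing Implicit Defensive.

Definition incl_rel (X : Type) (R S : X -> X -> Prop) : Prop :=
  forall a b, R a b -> S a b.

(* For
   lattices, order isomorphisms are exactly lattice isomorphisms. *)
Definition iso_to_relset (d : Order.disp_t) (L : latticeType d) (X : Type)
    (P : (X -> X -> Prop) -> Prop) : Prop :=
  exists f : L -> X -> X -> Prop,
    [/\ forall x, P (f x),
        forall R, P R -> exists x, forall a b, f x a b <-> R a b
      & forall x y, (x <= y)%O <-> incl_rel (f x) (f y)].

Inductive term (sym : Type) (ar : sym -> nat) : Type :=
  | Var : nat -> term ar
  | App : forall s : sym, ('I_(ar s) -> term ar) -> term ar.
Arguments Var {sym ar}.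
Arguments App {sym ar} s _.

Fixpoint subst (sym : Type) (ar : sym -> nat) (sg : nat -> term ar)
    (t : term ar) : term ar :=
  match t with
  | Var n => sg n
  | App s ts => App s (fun i => subst sg (ts i))
  end.

(* An equational theory = a set of identities closed under equational
   deduction = a fully invariant congruence of the term algebra. *)
Definition equational_theory (sym : Type) (ar : sym -> nat)
    (T : term ar -> term ar -> Prop) : Prop :=
  [/\ forall t, T t t,
      forall t u, T t u -> T u t,
      forall t u v, T t u -> T u v -> T t v,
      forall s (ts us : 'I_(ar s) -> term ar),
        (forall i, T (ts i) (us i)) -> T (App s ts) (App s us)
    & forall sg t u, T t u -> T (subst sg t) (subst sg u)].

(* Carrier C; op s : C^(ar s) -> C; q n : C -> C^n -> C (arity n+1);
   e i is e_i for i >= 1 (the value e 0 is never used).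
   Argument vectors x_1..x_n are functions 'I_n -> C, x_(i+1) = y i. *)

Definition pad (C : Type) (k n : nat) (y : 'I_k -> C) (dflt : nat -> C)
    : 'I_n -> C :=
  fun i => if @insub nat (fun m => m < k) 'I_k (nat_of_ord i) is Some j
           then y j else dflt i.

Definition is_clone_alg (sym : Type) (ar : sym -> nat) (C : Type)
    (op : forall s : sym, ('I_(ar s) -> C) -> C)
    (q : forall n : nat, C -> ('I_n -> C) -> C) (e : nat -> C) : Prop :=
  (forall n (i : 'I_n) (y : 'I_n -> C), q n (e i.+1) y = y i) /\
  (forall n j (y : 'I_n -> C), n < j -> q n (e j) y = e j) /\
  (forall n x, q n x (fun i : 'I_n => e i.+1) = x) /\
  (forall k n x (y : 'I_k -> C), k < n ->
                 q k x y = q n x (@pad C k n y (fun m => e m.+1))) /\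
  (forall n x (y z : 'I_n -> C),
                 q n (q n x y) z = q n x (fun i => q n (y i) z)) /\
  (forall s n (xs : 'I_(ar s) -> C) (y : 'I_n -> C),
                 q n (op s xs) y = op s (fun j => q n (xs j) y)).

Definition indep_of (C : Type) (q : forall n : nat, C -> ('I_n -> C) -> C)
    (e : nat -> C) (a : C) (n : nat) : Prop :=
  q n a (fun i : 'I_n => if i.+1 == n then e n.+1 else e i.+1) = a.

Definition finite_dimensional (C : Type)
    (q : forall n : nat, C -> ('I_n -> C) -> C) (e : nat -> C) : Prop :=
  forall a : C, exists N : nat,
    forall n, 1 <= n -> ~ indep_of q e a n -> n <= N.

(* congruences of the clone algebra (compatibility with the nullary e_i is
   automatic) *)
Definition is_congruence (sym : Type) (ar : sym -> nat) (C : Type)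
    (op : forall s : sym, ('I_(ar s) -> C) -> C)
    (q : forall n : nat, C -> ('I_n -> C) -> C) (R : C -> C -> Prop) : Prop :=
  [/\ forall a, R a a,
      forall a b, R a b -> R b a,
      forall a b c, R a b -> R b c -> R a c,
      forall s (xs ys : 'I_(ar s) -> C),
        (forall i, R (xs i) (ys i)) -> R (op s xs) (op s ys)
    & forall n x x' (y y' : 'I_n -> C), R x x' ->
        (forall i, R (y i) (y' i)) -> R (q n x y) (q n x' y')].

(* Main.v *)
Require Import Defs.
From mathcomp Require Import all_boot all_order.
From mathcomp Require Import zify.
From Stdlib Require Import FunctionalExtensionality ProofIrrelevance ClassicalEpsilon Classical PropExtensionality.
Set Implicit Arguments. Unset Strict Implicit. Unset Printing Implicit Defensive.

Definition extf (A : Type) (n : nat) (ys : 'I_n -> A) (d : nat -> A) (m : nat) : A :=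
  if @insub nat (fun m => m < n) 'I_n m is Some j then ys j else d m.

Lemma extf_lt A n (ys : 'I_n -> A) d m (h : m < n) : extf ys d m = ys (Ordinal h).
Proof. by rewrite /extf insubT. Qed.

Lemma extf_ge A n (ys : 'I_n -> A) d m : n <= m -> extf ys d m = d m.
Proof. by move=> h; rewrite /extf insubN // -leqNgt. Qed.

Lemma pad_extf C k n (y : 'I_k -> C) d (i : 'I_n) : @pad C k n y d i = extf y d i.
Proof. by []. Qed.

Section Terms.
Variables (sym : Type) (ar : sym -> nat).

Fixpoint vb (t : term ar) : nat :=
  match t with Var n => n.+1 | App s ts => \max_(i < ar s) vb (ts i) end.

Lemma vb_App s (ts : 'I_(ar s) -> term ar) i : vb (ts i) <= vb (App s ts).
Proof. by rewrite /= (leq_bigmax i). Qed.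

Lemma subst_repl (R : term ar -> term ar -> Prop) :
  (forall t, R t t) ->
  (forall s (ts us : 'I_(ar s) -> term ar), (forall i, R (ts i) (us i)) -> R (App s ts) (App s us)) ->
  forall (t : term ar) sg sg', (forall m, m < vb t -> R (sg m) (sg' m)) -> R (subst sg t) (subst sg' t).
Proof.
move=> Rr Ra; elim=> [n|s ts IH] sg sg' H /=; first by apply: H.
apply: Ra => i; apply: IH => m hm; apply: H; exact: leq_trans hm (vb_App ts i).
Qed.

Lemma subst_bound (t : term ar) sg sg' : (forall m, m < vb t -> sg m = sg' m) -> subst sg t = subst sg' t.
Proof.
apply: (@subst_repl eq) => // s ts us H; congr App; exact: functional_extensionality.
Qed.

Lemma subst_var (t : term ar) : subst Var t = t.
Proof.
elim: t => //= s ts IH; congr App; apply: functional_extensionality => i; exact: IH.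
Qed.

Lemma subst_comp sg tau (t : term ar) : subst sg (subst tau t) = subst (fun m => subst sg (tau m)) t.
Proof.
elim: t => //= s ts IH; congr App; apply: functional_extensionality => i; exact: IH.
Qed.

Lemma theory_repl T : equational_theory T ->
  forall (t : term ar) sg sg', (forall m, m < vb t -> T (sg m) (sg' m)) -> T (subst sg t) (subst sg' t).
Proof. by case=> r _ _ a _; apply: subst_repl. Qed.

End Terms.

Lemma transfer d (L : latticeType d) X Y (P : (X -> X -> Prop) -> Prop) (Q : (Y -> Y -> Prop) -> Prop)
  (Phi : (X -> X -> Prop) -> (Y -> Y -> Prop)) :
  (forall R, P R -> Q (Phi R)) ->
  (forall S, Q S -> exists R, P R /\ forall a b, Phi R a b <-> S a b) ->
  (forall R R', P R -> P R' -> (incl_rel R R' <-> incl_rel (Phi R) (Phi R'))) ->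
  (forall R R', (forall a b, R a b <-> R' a b) -> forall a b, Phi R a b <-> Phi R' a b) ->
  iso_to_relset L P -> iso_to_relset L Q.
Proof.
move=> H1 H2 H3 H4 [f [Pf Sf Of]].
exists (fun x => Phi (f x)); split.
- by move=> x; apply: H1.
- move=> S /H2 [R [PR HR]]; have [x Hx] := Sf R PR.
  exists x => a b; rewrite -HR; exact: H4.
- move=> x y; rewrite Of; exact: H3.
Qed.

Unset Implicit Arguments.

Section Back.
Variables (sym : Type) (ar : sym -> nat) (C : Type)
  (op : forall s : sym, ('I_(ar s) -> C) -> C)
  (q : forall n : nat, C -> ('I_n -> C) -> C) (e : nat -> C).
Hypothesis Hc : is_clone_alg op q e.


Lemma C1 n (i : 'I_n) (y : 'I_n -> C) : q n (e i.+1) y = y i.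
Proof. by case: Hc => H _; apply: H. Qed.
Lemma C2 n j (y : 'I_n -> C) : n < j -> q n (e j) y = e j.
Proof. by case: Hc => _ [H _]; apply: H. Qed.
Lemma C3 n x : q n x (fun i : 'I_n => e i.+1) = x.
Proof. by case: Hc => _ [] _ [H _]; apply: H. Qed.
Lemma C4 k n x (y : 'I_k -> C) : k < n -> q k x y = q n x (@pad C k n y (fun m => e m.+1)).
Proof. by case: Hc => _ [] _ [] _ [H _]; apply: H. Qed.
Lemma C5 n x (y z : 'I_n -> C) : q n (q n x y) z = q n x (fun i => q n (y i) z).
Proof. by case: Hc => _ [] _ [] _ [] _ [H _]; apply: H. Qed.
Lemma C6 s n (xs : 'I_(ar s) -> C) (y : 'I_n -> C) : q n (op s xs) y = op s (fun j => q n (xs j) y).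
Proof. by case: Hc => _ [] _ [] _ [] _ []. Qed.

Lemma C4' k n x (y : 'I_k -> C) : k <= n -> q k x y = q n x (@pad C k n y (fun m => e m.+1)).
Proof.
rewrite leq_eqVlt => /orP [/eqP Ek|]; last exact: C4.
subst n; congr (q k x _); apply: functional_extensionality => i.
by rewrite pad_extf (extf_lt _ _ (ltn_ord i)); congr y; apply: val_inj.
Qed.

Lemma S1 a n b : indep_of q e a n ->
  q n a (fun i : 'I_n => if i.+1 == n then b else e i.+1) = a.
Proof.
rewrite /indep_of => H; rewrite -{1}H C5.
transitivity (q n a (fun i : 'I_n => if i.+1 == n then e n.+1 else e i.+1)); last exact: H.
congr (q n a _); apply: functional_extensionality => i.
case: eqP => hi; first by rewrite C2.
by rewrite C1; case: eqP.
Qed.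

Variable k : nat.
Variable a : C.
Hypothesis Hind : forall n, k < n -> indep_of q e a n.

Lemma S2 M j (w : 'I_M -> C) : k < j -> j <= M ->
  q M a w = q M a (fun i : 'I_M => if i.+1 == j then e M.+1 else w i).
Proof.
move=> hkj hjM.
have Ha := S1 a j (e M.+1) (Hind j hkj).
rewrite (C4' _ _ _ _ hjM) in Ha.
transitivity (q M (q M a (@pad C j M (fun i : 'I_j => if i.+1 == j then e M.+1 else e i.+1) (fun m => e m.+1))) w); first by rewrite Ha.
rewrite C5; congr (q M a _); apply: functional_extensionality => i.
rewrite pad_extf; case: (ltnP i j) => hij.
- rewrite (extf_lt _ _ hij) /=; case: eqP => _; first by rewrite C2.
  by rewrite C1.
- rewrite extf_ge // C1; case: eqP => //; lia.
Qed.

Lemma IL0 M (w : 'I_M -> C) :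
  q M a w = q M a (fun i : 'I_M => if k <= i then e M.+1 else w i).
Proof.
pose r p (i : 'I_M) := if (k <= i) && (i < p) then e M.+1 else w i.
have H : forall p, p <= M -> q M a w = q M a (r p).
  elim=> [|p IH] hp.
    congr (q M a _); apply: functional_extensionality => i; by rewrite /r andbF.
  rewrite IH; last by lia.
  case: (leqP k p) => hkp.
    rewrite (@S2 M p.+1) //; congr (q M a _); apply: functional_extensionality => i.
    by rewrite /r; repeat case: ifP; move=> *; try done; exfalso; lia.
  congr (q M a _); apply: functional_extensionality => i.
  by rewrite /r; repeat case: ifP; move=> *; try done; exfalso; lia.
rewrite (H M (leqnn M)); congr (q M a _); apply: functional_extensionality => i.
by rewrite /r ltn_ord andbT.
Qed.

Lemma IL M (w w' : 'I_M -> C) : (forall i : 'I_M, i < k -> w i = w' i) -> q M a w = q M a w'.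
Proof.
move=> H; rewrite IL0 [RHS]IL0; congr (q M a _); apply: functional_extensionality => i.
case: leqP => // hi; exact: H.
Qed.

Lemma DL M (y : 'I_k -> C) (s : 'I_M -> C) :
  q M (q k a y) s = q k a (fun i => q M (y i) s).
Proof.
case: (ltnP M k) => hM.
- rewrite (C4 _ _ _ s hM) C5; congr (q k a _); apply: functional_extensionality => i.
  by rewrite (C4 _ _ _ s hM).
- rewrite (C4' _ _ _ y hM) C5 (C4' _ _ _ _ hM); apply: IL => i hi.
  by rewrite !pad_extf !(extf_lt _ _ hi).
Qed.
End Back.


Section Back2.
Variables (sym : Type) (ar : sym -> nat) (C : Type)
  (op : forall s : sym, ('I_(ar s) -> C) -> C)
  (q : forall n : nat, C -> ('I_n -> C) -> C) (e : nat -> C).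
Hypothesis Hc : is_clone_alg op q e.
Variable N : C -> nat.
Hypothesis HN : forall a n, N a < n -> indep_of q e a n.

Fixpoint ev (t : term N) : C :=
  match t with Var n => e n.+1 | App a ts => q (N a) a (fun i => ev (ts i)) end.

Definition cst (a : C) : term N := App a (fun i : 'I_(N a) => Var i).

Lemma ev_cst a : ev (cst a) = a.
Proof. exact: (C3 _ _ _ _ _ _ Hc). Qed.

Lemma vb_cst a : vb (cst a) <= N a.
Proof. by apply/bigmax_leqP => i _. Qed.

Lemma KL (t : term N) M sg : vb t <= M ->
  ev (subst sg t) = q M (ev t) (fun i : 'I_M => ev (sg i)).
Proof.
elim: t sg => [n|a ts IH] sg /= h.
  by rewrite (C1 _ _ _ _ _ _ Hc _ (Ordinal h)).
rewrite (DL _ _ _ _ _ _ Hc (N a) a (HN a)); congr (q _ a _); apply: functional_extensionality => i.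
apply: IH; exact: leq_trans (vb_App ts i) h.
Qed.

Definition Phi (R : C -> C -> Prop) : term N -> term N -> Prop := fun t u => R (ev t) (ev u).

Lemma Phi_theory R : is_congruence op q R -> equational_theory (Phi R).
Proof.
case=> r s t _ cq; split; rewrite /Phi.
- by [].
- by move=> ? ?; apply: s.
- by move=> ? ? ?; apply: t.
- by move=> a ts us H /=; apply: cq.
move=> sg x y H; pose M := maxn (vb x) (vb y).
rewrite (KL x M) ?leq_maxl // (KL y M) ?leq_maxr //; exact: cq.
Qed.

Lemma op_q s (xs : 'I_(ar s) -> C) : op s xs = q (ar s) (op s (fun i => e i.+1)) xs.
Proof.
rewrite (C6 _ _ _ _ _ _ Hc); congr (op s _); apply: functional_extensionality => i.
by rewrite (C1 _ _ _ _ _ _ Hc).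
Qed.

Definition Th (T : term N -> term N -> Prop) : C -> C -> Prop := fun a b => T (cst a) (cst b).

Lemma K_sub T : equational_theory T -> incl_rel (Phi eq) T ->
  forall t, T t (cst (ev t)).
Proof. by move=> _ H t; apply: H; rewrite /Phi ev_cst. Qed.

Lemma Th_cong T : equational_theory T -> incl_rel (Phi eq) T -> is_congruence op q (Th T).
Proof.
move=> HT HK; have [r s t ap sb] := HT.
have qc : forall n x x' (y y' : 'I_n -> C), Th T x x' ->
        (forall i, Th T (y i) (y' i)) -> Th T (q n x y) (q n x' y').
  move=> n x x' y y' Hx Hy; rewrite /Th.
  pose sg (z : 'I_n -> C) := extf (fun i => cst (z i)) (@Var C N).
  have ev_sb : forall x (z : 'I_n -> C), ev (subst (sg z) (cst x)) = q n x z.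
    move=> x0 z; rewrite (KL _ (maxn n (N x0))); last by apply: leq_trans (vb_cst x0) (leq_maxr _ _).
    rewrite [RHS](C4' _ _ _ _ _ _ Hc n (maxn n (N x0))) ?leq_maxl // ev_cst.
    congr (q _ x0 _); apply: functional_extensionality => i.
    rewrite pad_extf; case: (ltnP i n) => hi.
      by rewrite /sg !(extf_lt _ _ hi) ev_cst.
    by rewrite /sg !extf_ge.
  apply: (t _ (subst (sg y) (cst x))).
    apply: HK; by rewrite /Phi ev_cst ev_sb.
  apply: (t _ (subst (sg y) (cst x'))); first exact: sb.
  apply: (t _ (subst (sg y') (cst x'))).
    apply: (theory_repl HT) => m _; rewrite /sg; case: (ltnP m n) => hm.
      by rewrite !(extf_lt _ _ hm); apply: Hy.
    by rewrite !extf_ge.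
  apply: s; apply: HK; by rewrite /Phi ev_cst ev_sb.
split; rewrite /Th.
- by [].
- by move=> ? ?; apply: s.
- by move=> ? ? ?; apply: t.
- move=> f xs ys H; rewrite (op_q f xs) (op_q f ys); apply: qc => //.
- exact: qc.
Qed.

Lemma Phi_Th T : equational_theory T -> incl_rel (Phi eq) T ->
  forall a b, Phi (Th T) a b <-> T a b.
Proof.
move=> HT HK; have [r s t _ _] := HT; rewrite /Phi /Th => a b.
have Ha := K_sub T HT HK a; have Hb := K_sub T HT HK b.
split=> H.
- apply: (t _ _ _ Ha); apply: (t _ _ _ H); exact: s.
- apply: (t _ _ _ (s _ _ Ha)); exact: t Hb.
Qed.

Lemma Phi_order R R' : is_congruence op q R -> is_congruence op q R' ->
  (incl_rel R R' <-> incl_rel (Phi R) (Phi R')).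
Proof.
move=> _ _; split => H x y; rewrite /Phi.
- exact: H.
- move=> Hxy; have := H (cst x) (cst y); rewrite /Phi !ev_cst; exact.
Qed.

Lemma eq_cong : is_congruence op q eq.
Proof.
split => //.
- by move=> ? ? ? -> ->.
- by move=> f xs ys H; congr (op f _); apply: functional_extensionality.
- by move=> n x x' y y' -> H; congr (q n x' _); apply: functional_extensionality.
Qed.

Lemma back_iso d (L : latticeType d) : iso_to_relset L (is_congruence op q) ->
  equational_theory (Phi eq) /\
  iso_to_relset L (fun T' => equational_theory T' /\ incl_rel (Phi eq) T').
Proof.
move=> H; split; first exact: Phi_theory eq_cong.
apply: (transfer (Phi:=Phi) _ _ _ _ H).
- move=> R HR; split; first exact: Phi_theory.
  by move=> t u; rewrite /Phi => ->; case: HR.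
- move=> T [HT HK]; exists (Th T); split; first exact: Th_cong.
  exact: Phi_Th.
- exact: Phi_order.
- by move=> R R' HR a b; rewrite /Phi.
Qed.
End Back2.


Section Fwd.
Variables (sym : Type) (ar : sym -> nat) (T : term ar -> term ar -> Prop).
Hypothesis HT : equational_theory T.

Lemma Tr t : T t t. Proof. by case: HT. Qed.
Lemma Ts t u : T t u -> T u t. Proof. by case: HT => _ H _ _ _; apply: H. Qed.
Lemma Tt t u v : T t u -> T u v -> T t v. Proof. by case: HT => _ _ H _ _; apply: H. Qed.
Lemma Ta s (ts us : 'I_(ar s) -> term ar) : (forall i, T (ts i) (us i)) -> T (App s ts) (App s us).
Proof. by case: HT => _ _ _ H _; apply: H. Qed.
Lemma Tsub sg t u : T t u -> T (subst sg t) (subst sg u).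
Proof. by case: HT => _ _ _ _ H; apply: H. Qed.

Definition Q := {P : term ar -> Prop | exists t, P = T t}.
Definition cls (t : term ar) : Q := exist _ (T t) (ex_intro _ t erefl).
Definition rep (x : Q) : term ar := proj1_sig (constructive_indefinite_description _ (proj2_sig x)).

Lemma rep_spec x : proj1_sig x = T (rep x).
Proof. rewrite /rep; case: constructive_indefinite_description => //. Qed.

Lemma sig_eq (A : Type) (F : A -> Prop) (a b : A) pa pb : a = b -> exist F a pa = exist F b pb.
Proof. move=> E; subst b; congr exist; apply: proof_irrelevance. Qed.

Lemma cls_eq t u : T t u -> cls t = cls u.
Proof.
move=> H; rewrite /cls.
have E : T t = T u.
  apply: functional_extensionality => v; apply: propositional_extensionality; split.
  - by move=> H'; apply: (Tt _ _ _ (Ts _ _ H) H').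
  - by move=> H'; apply: (Tt _ _ _ H H').
exact: sig_eq.
Qed.

Lemma cls_inj t u : cls t = cls u -> T t u.
Proof. move=> /(f_equal (@proj1_sig _ _)) /= ->; exact: Tr. Qed.

Lemma clsK x : cls (rep x) = x.
Proof.
case: x => P p; rewrite /cls.
have E := rep_spec (exist _ P p); simpl in E.
exact: sig_eq.
Qed.

Lemma repK t : T (rep (cls t)) t.
Proof. apply: cls_inj; exact: clsK. Qed.

Lemma clsfK {n : nat} (y : 'I_n -> Q) : (fun i => cls (rep (y i))) = y.
Proof. apply: functional_extensionality => i; exact: clsK. Qed.

Definition ext {n : nat} (ys : 'I_n -> term ar) := extf ys (@Var sym ar).

Definition opQ (s : sym) (xs : 'I_(ar s) -> Q) : Q := cls (App s (fun i => rep (xs i))).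
Definition qQ (n : nat) (x : Q) (y : 'I_n -> Q) : Q := cls (subst (ext (fun i => rep (y i))) (rep x)).
Definition eQ (i : nat) : Q := cls (Var i.-1).

Lemma opE s ts : opQ s (fun i => cls (ts i)) = cls (App s ts).
Proof. apply: cls_eq; apply: Ta => i; exact: repK. Qed.

Lemma qE n t (ys : 'I_n -> term ar) : qQ n (cls t) (fun i => cls (ys i)) = cls (subst (ext ys) t).
Proof.
apply: cls_eq; apply: (Tt _ (subst (ext ys) (rep (cls t)))).
  apply: (theory_repl HT) => m _; rewrite /ext; case: (ltnP m n) => h.
    rewrite !(extf_lt _ _ h); exact: repK.
  rewrite !extf_ge //; exact: Tr.
apply: Tsub; exact: repK.
Qed.

Lemma ext_var n : ext (fun i : 'I_n => Var i) = @Var sym ar.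
Proof.
apply: functional_extensionality => m; rewrite /ext; case: (ltnP m n) => h.
  by rewrite (extf_lt _ _ h).
by rewrite extf_ge.
Qed.

Lemma Q_clone : is_clone_alg opQ qQ eQ.
Proof.
split; [|split; [|split; [|split; [|split]]]].
- move=> n i y; rewrite -(clsfK y) qE /=; congr cls.
  by rewrite /ext (extf_lt _ _ (ltn_ord i)); congr rep; congr y; apply: val_inj.
- move=> n j y hj; rewrite -(clsfK y) /eQ qE /= /ext extf_ge //; lia.
- move=> n x; rewrite -(clsK x) /eQ.
  have -> : (fun i : 'I_n => cls (Var i.+1.-1)) = (fun i : 'I_n => cls (Var i)) by [].
  by rewrite qE ext_var subst_var.
- move=> k n x y hk; rewrite -(clsK x) -(clsfK y) /eQ.
  have -> : @pad Q k n (fun i => cls (rep (y i))) (fun m => cls (Var m.+1.-1))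
          = (fun i => cls (@pad (term ar) k n (fun i => rep (y i)) (@Var sym ar) i)).
    apply: functional_extensionality => i; rewrite !pad_extf.
    case: (ltnP i k) => h; first by rewrite !(extf_lt _ _ h).
    by rewrite !extf_ge.
  rewrite !qE; congr cls; congr subst; apply: functional_extensionality => m.
  rewrite /ext; case: (ltnP m k) => h1.
    have h2 : m < n by lia.
    by rewrite (extf_lt _ _ h1) (extf_lt _ _ h2) pad_extf (extf_lt _ _ h1).
  case: (ltnP m n) => h2.
    by rewrite (extf_ge _ _ h1) (extf_lt _ _ h2) pad_extf extf_ge.
  by rewrite !extf_ge.
- move=> n x y z; rewrite -(clsK x) -(clsfK y) -(clsfK z) qE.
  have -> : (fun i => qQ n (cls (rep (y i))) (fun i0 => cls (rep (z i0))))
          = (fun i => cls (subst (ext (fun i0 => rep (z i0))) (rep (y i)))).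
    by apply: functional_extensionality => i; rewrite qE.
  rewrite !qE subst_comp; congr cls; congr subst; apply: functional_extensionality => m.
  rewrite /ext; case: (ltnP m n) => h.
    by rewrite !(extf_lt _ _ h).
  by rewrite !extf_ge //= extf_ge.
- move=> s n xs y; rewrite -(clsfK xs) -(clsfK y) opE qE.
  have -> : (fun j => qQ n (cls (rep (xs j))) (fun i => cls (rep (y i))))
          = (fun j => cls (subst (ext (fun i => rep (y i))) (rep (xs j)))).
    by apply: functional_extensionality => i; rewrite qE.
  by rewrite opE.
Qed.

Lemma Q_fd : finite_dimensional qQ eQ.
Proof.
move=> x; rewrite -(clsK x); set t := rep x; exists (vb t) => n _ Hn.
rewrite leqNgt; apply/negP => hn; apply: Hn; rewrite /indep_of /eQ.
have -> : (fun i : 'I_n => if i.+1 == n then cls (Var n.+1.-1) else cls (Var i.+1.-1))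
        = (fun i : 'I_n => cls (if i.+1 == n then Var n else Var i)).
  by apply: functional_extensionality => i; case: ifP.
rewrite qE; congr cls; rewrite -[RHS](subst_var t); apply: subst_bound => m hm.
have h : m < n by lia.
rewrite /ext (extf_lt _ _ h) /=; case: eqP => //; lia.
Qed.

Lemma cls_subst sg t M : vb t <= M -> cls (subst sg t) = qQ M (cls t) (fun i => cls (sg i)).
Proof.
move=> h; rewrite qE; congr cls; apply: subst_bound => m hm.
by rewrite /ext (extf_lt _ _ (leq_trans hm h)).
Qed.

Definition Phi2 (E : term ar -> term ar -> Prop) : Q -> Q -> Prop := fun x y => E (rep x) (rep y).
Definition Th2 (R : Q -> Q -> Prop) : term ar -> term ar -> Prop := fun t u => R (cls t) (cls u).

Lemma Th2_theory R : is_congruence opQ qQ R -> equational_theory (Th2 R) /\ incl_rel T (Th2 R).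
Proof.
case=> r s t co cq; split; last by move=> a b /cls_eq; rewrite /Th2 => ->.
split; rewrite /Th2.
- by [].
- by move=> ? ?; apply: s.
- by move=> ? ? ?; apply: t.
- by move=> f ts us H; rewrite -!opE; apply: co.
move=> sg x y H; pose M := maxn (vb x) (vb y).
rewrite (cls_subst sg x M) ?leq_maxl // (cls_subst sg y M) ?leq_maxr //; exact: cq.
Qed.

Lemma Phi2_cong E : equational_theory E -> incl_rel T E -> is_congruence opQ qQ (Phi2 E).
Proof.
move=> HE HTE; have [r s t ap sb] := HE.
have repK' : forall u, E (rep (cls u)) u by move=> u; apply: HTE; exact: repK.
split; rewrite /Phi2.
- by [].
- by move=> ? ?; apply: s.
- by move=> ? ? ?; apply: t.
- move=> f xs ys H; rewrite /opQ.
  apply: (t _ _ _ (repK' _)); apply: (t _ _ _ _ (s _ _ (repK' _))); exact: ap.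
move=> n x x' y y' Hx Hy; rewrite /qQ.
apply: (t _ _ _ (repK' _)); apply: (t _ _ _ _ (s _ _ (repK' _))).
apply: (t _ (subst (ext (fun i => rep (y i))) (rep x'))); first exact: sb.
apply: (theory_repl HE) => m _; rewrite /ext; case: (ltnP m n) => h.
  by rewrite !(extf_lt _ _ h); apply: Hy.
by rewrite !extf_ge.
Qed.

Lemma fwd_iso d (L : latticeType d) :
  iso_to_relset L (fun T' => equational_theory T' /\ incl_rel T T') ->
  iso_to_relset L (is_congruence opQ qQ).
Proof.
apply: (transfer (Phi:=Phi2)).
- by move=> E [HE HTE]; apply: Phi2_cong.
- move=> R HR; exists (Th2 R); split; first exact: Th2_theory.
  by move=> a b; rewrite /Phi2 /Th2 !clsK.
- move=> E E' [HE HTE] [HE' HTE']; split => H a b.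
  + exact: H.
  + move=> Hab; have [r s t _ _] := HE'.
    have := H (cls a) (cls b); rewrite /Phi2 => H1.
    have [_ sE tE _ _] := HE.
    have H2 : E (rep (cls a)) (rep (cls b)).
      apply: (tE _ _ _ (HTE _ _ (repK a))); apply: (tE _ _ _ Hab); apply: sE; apply: HTE; exact: repK.
    have H3 := H1 H2.
    apply: (t _ _ _ (s _ _ (HTE' _ _ (repK a)))); apply: (t _ _ _ H3); apply: HTE'; exact: repK.
- by move=> R R' HR a b; rewrite /Phi2.
Qed.
End Fwd.


Theorem theorem10p6 (d : Order.disp_t) (L : latticeType d) :
  (exists (sym : Type) (ar : sym -> nat) (T : term ar -> term ar -> Prop),
      equational_theory T /\
      iso_to_relset L (fun T' => equational_theory T' /\ incl_rel T T'))
  <->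
  (exists (sym : Type) (ar : sym -> nat) (C : Type)
          (op : forall s : sym, ('I_(ar s) -> C) -> C)
          (q : forall n : nat, C -> ('I_n -> C) -> C) (e : nat -> C),
      [/\ is_clone_alg op q e, finite_dimensional q e
        & iso_to_relset L (is_congruence op q)]).
Proof.
split.
- case=> sym [ar [T [HT Hiso]]].
  exists sym, ar, (Q sym ar T), (opQ sym ar T), (qQ sym ar T), (eQ sym ar T).
  split; [exact: Q_clone | exact: Q_fd | exact: fwd_iso].
- case=> sym [ar [C [op [q [e [Hc Hfd Hiso]]]]]].
  pose N (a : C) : nat := proj1_sig (constructive_indefinite_description _ (Hfd a)).
  have HN : forall a n, N a < n -> indep_of q e a n.
    move=> a n hn; apply: NNPP => H.
    have := proj2_sig (constructive_indefinite_description _ (Hfd a)) n.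
    rewrite -/(N a) => H'; have := H' (leq_ltn_trans (leq0n _) hn) H; lia.
  have [HK HI] := back_iso sym ar C op q e Hc N HN d L Hiso.
  by exists C, N; eexists; split; [exact: HK | exact: HI].
Qed.
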